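(* Let $P\in\mathfrak N_2$, let $r:P\to R$ be a retraction with $r[P(0)]=R(0)\subseteq P(0)$, and let $f:P(0)\to P(0)$ be an idempotent map with $|f[P(0)]|=|R(0)|$. Then there is a retraction $s:P\to S$ with $S\cong R$ and $s(x)=f(x)$ for all $x\in P(0)$.
   Context: All posets are finite; $h_P$ is the height; level sets $P(0)=\min P$, $P(k+1)=\min(P\setminus\bigcup_{i\le k}P(i))$; $R(0)$ is the set of minimal elements of $R$. $A<B$ means $a<b$ for all $a\in A,b\in B$. A retraction $r:P\to R$ is an idempotent order-preserving self-map of $P$ with image $R$. A section of width three is a poset $P$ of height $h_P\ge1$ with carrier $\{c_{k,j}:k\in[0,h_P],j\in\{0,1,2\}\}$ such that: $c_{0,j}<\dots<c_{h_P,j}$ for each $j$; each $\{c_{k,0},c_{k,1},c_{k,2}\}$ is an antichain; $c_{k,i}<c_{\ell,j}\Rightarrow c_{k,i+1}<c_{\ell,j+1}$ (indices mod 3); and for no $k$ is $P(k)<P(k+1)$. It is nice if for all $x<y$: $\{z:z>x\}\not\subseteq\{z:z\ge y\}$ and $\{z:z<y\}\not\subseteq\{z:z\le x\}$. $\mathfrak N_2$ is the class of nice sections of width three of height $\ge2$ with horizon 2, i.e. $P(k)<P(\ell)$ whenever $\ell\ge k+2$, and not $P(k)<P(k+1)$ for any $k$. *)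

(* Defs.v *)
From mathcomp Require Import all_boot.
Set Implicit Arguments. Unset Strict Implicit. Unset Printing Implicit Defensive.

Section FinPoset.
Variable T : finType.
Variable le : rel T.

Definition is_poset : Prop :=
  [/\ reflexive le, antisymmetric le & transitive le].

Definition ltp (x y : T) : bool := (x != y) && le x y.

Definition minimal (A : {set T}) : {set T} :=
  [set x in A | [forall y in A, ~~ ltp y x]].

Fixpoint levels_upto (k : nat) : {set T} :=
  match k with
  | 0 => minimal [set: T]
  | k'.+1 => levels_upto k' :|: minimal (~: levels_upto k')
  end.

(* level sets: P(0) = min P, P(k+1) = min (P \ U_{i<=k} P(i)) *)
Definition level (k : nat) : {set T} :=
  match k with
  | 0 => minimal [set: T]
  | k'.+1 => minimal (~: levels_upto k')
  end.

Definition set_below (A B : {set T}) : Prop :=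
  forall a b, a \in A -> b \in B -> ltp a b.

Definition has_height (h : nat) : Prop :=
  (exists s : seq T, sorted ltp s /\ size s = h.+1) /\
  (forall s : seq T, sorted ltp s -> size s <= h.+1).

Definition nice : Prop :=
  forall x y, ltp x y ->
    (exists z, ltp x z && ~~ le y z) /\ (exists z, ltp z y && ~~ le z x).

(* retraction: idempotent order-preserving self-map (its image is the retract) *)
Definition retraction (r : T -> T) : Prop :=
  (forall x, r (r x) = r x) /\ (forall x y, le x y -> le (r x) (r y)).

Definition iso_subposets (S R : {set T}) : Prop :=
  exists phi psi : T -> T,
    [/\ {in S, forall x, phi x \in R}, {in R, forall y, psi y \in S},
        {in S, forall x, psi (phi x) = x}, {in R, forall y, phi (psi y) = y}
      & {in S &, forall x y, le x y = le (phi x) (phi y)}].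

End FinPoset.

(* carrier of a section of width three: c_{k,j} = (k, j), k in [0,h], j in {0,1,2} *)
Definition sec_carrier (h : nat) : finType := ('I_h.+1 * 'I_3)%type.

Definition section3 (h : nat) (le : rel (sec_carrier h)) : Prop :=
  [/\ is_poset le, has_height le h, 1 <= h &
    [/\ (forall (j : 'I_3) (k l : 'I_h.+1), k < l -> ltp le (k, j) (l, j)),
      (forall (k : 'I_h.+1) (i j : 'I_3), le (k, i) (k, j) -> i = j),
      (forall (k l : 'I_h.+1) (i j : 'I_3),
          ltp le (k, i) (l, j) -> ltp le (k, ordS i) (l, ordS j))
    & (forall k, k < h -> ~ set_below le (level le k) (level le k.+1))]].

Definition horizon2 (h : nat) (le : rel (sec_carrier h)) : Prop :=
  forall k l, k.+2 <= l -> set_below le (level le k) (level le l).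

Definition in_N2 (h : nat) (le : rel (sec_carrier h)) : Prop :=
  [/\ section3 le, nice le, 2 <= h & horizon2 le].

(* Main.v *)
Require Import Defs.
From mathcomp Require Import all_boot all_algebra ring.
Import GRing.Theory.
Set Implicit Arguments. Unset Strict Implicit. Unset Printing Implicit Defensive.

Definition o0 : 'I_3 := @Ordinal 3 0 isT.
Definition o1 : 'I_3 := @Ordinal 3 1 isT.
Definition o2 : 'I_3 := @Ordinal 3 2 isT.
Definition l3 : seq 'I_3 := [:: o0; o1; o2].
Definition mk {A : Type} (a b c : A) (j : 'I_3) : A :=
  if val j == 0%N then a else if val j == 1%N then b else c.
Definition pmap3 (b : bool) (c j : 'I_3) : 'I_3 := if b then (c - j)%R else (j + c)%R.
Definition pinv3 (b : bool) (c j : 'I_3) : 'I_3 := if b then (c - j)%R else (j - c)%R.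
Definition idem (g : 'I_3 -> 'I_3) := all (fun j => g (g j) == g j) l3.
Definition sz (g : 'I_3 -> 'I_3) := size (undup (map g l3)).

Lemma comb : all (fun a => all (fun b => all (fun c =>
  all (fun a' => all (fun b' => all (fun c' =>
   (idem (mk a b c) && idem (mk a' b' c') && (sz (mk a b c) == sz (mk a' b' c'))) ==>
   has (fun bb => has (fun cc => all (fun j => mk a b c j == pmap3 bb cc (mk a' b' c' (pinv3 bb cc j))) l3) l3) [:: true; false]
  ) l3) l3) l3) l3) l3) l3.
Proof. vm_compute. reflexivity. Qed.

Lemma str : all (fun a => all (fun b => all (fun c => all (fun e' =>
  (mk a b c 0%R && ~~ mk a b c e') ==>
   has (fun d => all (fun e => mk a b c (d - e)%R == mk a b c e) l3) l3) l3)
   [:: true; false]) [:: true; false]) [:: true; false].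
Proof. vm_compute. reflexivity. Qed.

Lemma mem_l3 (j : 'I_3) : j \in l3.
Proof. by case: j => [[|[|[|m]]] Hj]. Qed.

Lemma l3_all (P : 'I_3 -> bool) : all P l3 -> forall j, P j.
Proof. by move/allP => H j; apply: H; apply: mem_l3. Qed.

Lemma bool3 (P : bool -> bool) : all P [:: true; false] -> forall b, P b.
Proof. by move/allP => H [|]; apply: H; rewrite !inE. Qed.

Lemma mkE {A : Type} (g : 'I_3 -> A) : mk (g o0) (g o1) (g o2) =1 g.
Proof.
by case=> [[|[|[|m]]] Hj] //; rewrite /mk /=; congr g; apply: val_inj.
Qed.

Lemma eq_idem g g' : g =1 g' -> idem g = idem g'.
Proof. by move=> E; rewrite /idem; apply: eq_all => j; rewrite !E. Qed.

Lemma eq_sz g g' : g =1 g' -> sz g = sz g'.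
Proof. by move=> E; rewrite /sz (eq_map E). Qed.

Lemma combF (g1 g2 : 'I_3 -> 'I_3) : idem g1 -> idem g2 -> sz g1 = sz g2 ->
  exists bb cc, forall j, g1 j = pmap3 bb cc (g2 (pinv3 bb cc j)).
Proof.
move=> I1 I2 S.
move: comb => /l3_all/(_ (g1 o0)) /l3_all/(_ (g1 o1)) /l3_all/(_ (g1 o2))
  /l3_all/(_ (g2 o0)) /l3_all/(_ (g2 o1)) /l3_all/(_ (g2 o2)).
rewrite (eq_idem (mkE g1)) (eq_idem (mkE g2)) (eq_sz (mkE g1)) (eq_sz (mkE g2)).
rewrite I1 I2 S eqxx => /implyP/(_ isT) /hasP [bb _ /hasP [cc _ /allP Hj]].
exists bb, cc => j; have := Hj j (mem_l3 j).
by rewrite !mkE => /eqP.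
Qed.

Lemma strF (p : 'I_3 -> bool) e' : p 0%R -> ~~ p e' ->
  exists d, forall e, p (d - e)%R = p e.
Proof.
move=> H0 Hpe.
move: str => /bool3/(_ (p o0)) /bool3/(_ (p o1)) /bool3/(_ (p o2)) /l3_all/(_ e').
rewrite !mkE H0 Hpe => /implyP/(_ isT) /hasP [d _ /allP Hd].
exists d => e; have := Hd e (mem_l3 e).
by rewrite !mkE => /eqP.
Qed.

Lemma ordS_add (i : 'I_3) : ordS i = (i + 1)%R.
Proof. by apply: val_inj; case: i => [[|[|[|m]]] Hi]. Qed.

Lemma I3_cases (c : 'I_3) : c = 0%R \/ c = 1%R \/ c = (1 + 1)%R.
Proof.
case: c => [[|[|[|m]]] Hi] //.
- by left; apply: val_inj.
- by right; left; apply: val_inj.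
- by right; right; apply: val_inj.
Qed.

Ltac dN2 H := case: H => [[[Hr Hant Htr] _ _ [Hc Ha Hrot Hk]] Hn _ Hhor].

Lemma le_row h (le : rel (sec_carrier h)) : in_N2 le ->
  forall x y : sec_carrier h, le x y -> (x.1 <= y.1)%N.
Proof.
move=> H; dN2 H => [[k i] [l j]] /= Hle.
rewrite leqNgt; apply/negP => Hlk.
have /andP [_ H2] := Hc j l k Hlk.
have Hkk := Htr _ _ _ Hle H2.
have Eij := Ha _ _ _ Hkk; subst j.
have E : (k, i) = (l, i) by apply: Hant; rewrite Hle H2.
by case: E => Ekl; move: Hlk; rewrite Ekl ltnn.
Qed.

Lemma le_same h (le : rel (sec_carrier h)) : in_N2 le ->
  forall x y : sec_carrier h, x.1 = y.1 :> nat -> le x y = (x == y).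
Proof.
move=> H; have H' := H; dN2 H' => [[k i] [l j]] /= Ekl.
have Ekl' : k = l by apply: val_inj.
subst l; apply/idP/eqP => [Hle|->]; last by apply: Hr.
by rewrite (Ha _ _ _ Hle).
Qed.

Lemma ltp_row h (le : rel (sec_carrier h)) : in_N2 le ->
  forall x y : sec_carrier h, ltp le x y -> (x.1 < y.1)%N.
Proof.
move=> H x y /andP [Hne Hle].
rewrite ltn_neqAle (le_row H Hle) andbT.
apply/negP => /eqP E; move: Hle; rewrite (le_same H E) => /eqP Exy.
by rewrite Exy eqxx in Hne.
Qed.

Lemma lev h (le : rel (sec_carrier h)) : in_N2 le ->
  forall k, (k <= h)%N ->
  levels_upto le k = [set x : sec_carrier h | (x.1 <= k)%N] /\ level le k = [set x : sec_carrier h | x.1 == k :> nat].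
Proof.
move=> H; have H' := H; dN2 H'.
elim=> [|k IH] Hkh.
- have E0 : minimal le [set: sec_carrier h] = [set x : sec_carrier h | x.1 == 0 :> nat].
    apply/setP => x; rewrite !inE /=.
    case: (boolP (x.1 == 0 :> nat)) => Hx.
    + apply/forall_inP => y _; apply/negP => /(ltp_row H).
      by rewrite (eqP Hx) ltn0.
    + apply/negP => /forall_inP /(_ (ord0, x.2) (in_setT _)).
      case: x Hx => k j /= Hk0; rewrite (Hc j ord0 k) //.
      by rewrite lt0n.
  split; rewrite /= E0 //; apply/setP => x; by rewrite !inE leqn0.
- have [IH1 _] := IH (ltnW Hkh).
  have E : minimal le (~: levels_upto le k) = [set x : sec_carrier h | x.1 == k.+1 :> nat].
    apply/setP => x; rewrite /minimal IH1 !inE -ltnNge.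
    case: (boolP (x.1 == k.+1 :> nat)) => Hx.
    + rewrite (eqP Hx) leqnn /=.
      apply/forall_inP => y; rewrite !inE -ltnNge => Hy.
      apply/negP => /(ltp_row H); rewrite (eqP Hx) ltnS.
      by rewrite leqNgt Hy.
    + case: (boolP (k < x.1)%N) => //= Hkx.
      apply/negP => /forall_inP /(_ (inord k.+1, x.2)).
      have Hv : (inord k.+1 : 'I_h.+1) = k.+1 :> nat by rewrite inordK.
      rewrite !inE -ltnNge Hv ltnSn => /(_ isT).
      case: x Hx Hkx => l j /= Hx Hkx.
      rewrite (Hc j (inord k.+1) l) //.
      by rewrite Hv ltn_neqAle eq_sym Hx Hkx.
  split; last by [].
  rewrite /= E IH1; apply/setP => x; rewrite !inE.
  by rewrite (leq_eqVlt x.1 k.+1) ltnS orbC.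
Qed.


Lemma far h (le : rel (sec_carrier h)) : in_N2 le ->
  forall x y : sec_carrier h, (x.1.+2 <= y.1)%N -> ltp le x y.
Proof.
move=> H; have H' := H; dN2 H' => x y Hxy.
apply: (Hhor x.1 y.1 Hxy).
- by rewrite (lev H (ltn_ord x.1)).2 inE.
- by rewrite (lev H (ltn_ord y.1)).2 inE.
Qed.

Lemma ordS3 (i : 'I_3) : ordS (ordS (ordS i)) = i.
Proof. by apply: val_inj; case: i => [[|[|[|m]]] Hi]. Qed.

Lemma rot1 h (le : rel (sec_carrier h)) : in_N2 le ->
  forall k l i j, le (k, i) (l, j) = le (k, ordS i) (l, ordS j).
Proof.
move=> H; have H' := H; dN2 H' => k l i j.
have le_ltp : forall u v, le u v = (u == v) || ltp le u v.
  by move=> u v; rewrite /ltp; case: eqP => [->|] //=; rewrite Hr.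
have inj : injective (@ordS 3) by apply: (can_inj (g := fun x => ordS (ordS x))) => x; apply: ordS3.
rewrite !le_ltp !xpair_eqE (inj_eq inj); congr orb.
apply/idP/idP => [/Hrot //|/Hrot/Hrot]; by rewrite !ordS3.
Qed.

Lemma rotc h (le : rel (sec_carrier h)) : in_N2 le ->
  forall k l i j (c : 'I_3), le (k, i) (l, j) = le (k, (i + c)%R) (l, (j + c)%R).
Proof.
move=> H k l i j c.
case: (I3_cases c) => [->|[->|->]]; first by rewrite !addr0.
- by rewrite -!ordS_add -rot1.
- by rewrite !addrA -!ordS_add -!rot1.
Qed.

Definition Ad h (le : rel (sec_carrier h)) (k : nat) (e : 'I_3) :=
  le (inord k, 0%R) (inord k.+1, e).

Lemma adj h (le : rel (sec_carrier h)) : in_N2 le ->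
  forall x y : sec_carrier h, y.1 = (x.1).+1 :> nat -> le x y = Ad le x.1 (y.2 - x.2)%R.
Proof.
move=> H [k i] [l j] /= E.
rewrite (rotc H _ _ _ _ (- i)%R) subrr /Ad inord_val.
have -> : l = inord k.+1 by apply: val_inj => /=; rewrite inordK -E // ltn_ord.
by [].
Qed.

Definition dd h (le : rel (sec_carrier h)) k : 'I_3 :=
  odflt 0%R [pick d | [forall e, Ad le k (d - e)%R == Ad le k e]].

Fixpoint T0 h (le : rel (sec_carrier h)) k : 'I_3 :=
  if k is k'.+1 then (T0 le k' + dd le k')%R else 0%R.

Lemma Ad0 h (le : rel (sec_carrier h)) : in_N2 le -> forall k, (k < h)%N -> Ad le k 0%R.
Proof.
move=> H; have H' := H; dN2 H' => k Hkh.
have Hlt : ((inord k : 'I_h.+1) < (inord k.+1 : 'I_h.+1))%N by rewrite !inordK // ltnW.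
by case/andP: (Hc 0%R _ _ Hlt).
Qed.

Lemma not_all h (le : rel (sec_carrier h)) : in_N2 le ->
  forall k, (k < h)%N -> exists e', ~~ Ad le k e'.
Proof.
move=> H; have H' := H; dN2 H' => k Hkh.
case: (boolP [forall e, Ad le k e]) => [/forallP Hall | ]; last first.
  by rewrite negb_forall => /existsP.
exfalso; apply: (Hk k Hkh) => a b.
rewrite (lev H (k:=k) (ltnW Hkh)).2 (lev H (k:=k.+1) Hkh).2 !inE => /eqP Ha1 /eqP Hb1.
apply/andP; split.
- apply/negP => /eqP E; rewrite E Hb1 in Ha1.
  by apply: (n_Sn k); rewrite Ha1.
- by rewrite (adj H) ?Ha1 ?Hb1.
Qed.

Lemma refl_sym h (le : rel (sec_carrier h)) : in_N2 le ->
  forall k, (k < h)%N -> forall e, Ad le k (dd le k - e)%R = Ad le k e.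
Proof.
move=> H k Hkh e.
have [e' He'] := not_all H Hkh.
have [d Hd] := strF (Ad0 H Hkh) He'.
rewrite /dd; case: pickP => [d' /forallP Hd' | H0] /=; first by apply/eqP; apply: Hd'.
by have := H0 d; move/negP; case; apply/forallP => e0; rewrite Hd.
Qed.

Definition alpha h (le : rel (sec_carrier h)) (b : bool) (c : 'I_3) (x : sec_carrier h)
  : sec_carrier h :=
  (x.1, if b then (c + T0 le x.1 - x.2)%R else (x.2 + c)%R).
Definition beta h (le : rel (sec_carrier h)) (b : bool) (c : 'I_3) (x : sec_carrier h)
  : sec_carrier h :=
  (x.1, if b then (c + T0 le x.1 - x.2)%R else (x.2 - c)%R).

Lemma alphaK h (le : rel (sec_carrier h)) b c : cancel (alpha le b c) (beta le b c).
Proof. by case=> k j; case: b; rewrite /alpha /beta /=; congr pair; ring. Qed.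

Lemma betaK h (le : rel (sec_carrier h)) b c : cancel (beta le b c) (alpha le b c).
Proof. by case=> k j; case: b; rewrite /alpha /beta /=; congr pair; ring. Qed.

Lemma auto_gen h (le : rel (sec_carrier h)) : in_N2 le ->
  forall al : sec_carrier h -> sec_carrier h,
  (forall x, (al x).1 = x.1) -> injective al ->
  (forall x y : sec_carrier h, y.1 = (x.1).+1 :> nat -> le (al x) (al y) = le x y) ->
  forall x y, le (al x) (al y) = le x y.
Proof.
move=> H al Hrow Hinj Hadj x y.
have F : forall u v : sec_carrier h, (v.1 < u.1)%N -> le u v = false.
  by move=> u v Huv; apply/negP => /(le_row H); rewrite leqNgt Huv.
case: (ltngtP x.1 y.1) => Hxy.
- move: Hxy; rewrite leq_eqVlt => /orP [/eqP E | Hf]; first by apply: Hadj; rewrite E.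
  have /andP [_ ->] := far H Hf.
  have /andP [_ ->] // : ltp le (al x) (al y) by apply: (far H); rewrite !Hrow.
- by rewrite !F // !Hrow.
- by rewrite !(le_same H) ?Hrow // (inj_eq Hinj).
Qed.

Lemma alpha_auto h (le : rel (sec_carrier h)) : in_N2 le ->
  forall b c x y, le (alpha le b c x) (alpha le b c y) = le x y.
Proof.
move=> H [] c x y; last first.
  by case: x => k i; case: y => l j; rewrite /alpha /= -(rotc H).
apply: (auto_gen H) => // [{}x|{}x {}y E].
  exact: (can_inj (alphaK le true c)).
have Hx : (x.1 < h)%N by rewrite -ltnS -E; exact: ltn_ord.
rewrite !(adj H) //= E /=.
rewrite -(refl_sym H Hx (y.2 - x.2)%R); congr (Ad le x.1 _); ring.
Qed.

Lemma beta_auto h (le : rel (sec_carrier h)) : in_N2 le ->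
  forall b c x y, le (beta le b c x) (beta le b c y) = le x y.
Proof. by move=> H b c x y; rewrite -(alpha_auto H b c) !betaK. Qed.

Lemma alpha0 h (le : rel (sec_carrier h)) b c j :
  alpha le b c (ord0, j) = (ord0, pmap3 b c j).
Proof. by case: b; rewrite /alpha /pmap3 /=; congr pair; ring. Qed.

Lemma beta0 h (le : rel (sec_carrier h)) b c j :
  beta le b c (ord0, j) = (ord0, pinv3 b c j).
Proof. by case: b; rewrite /beta /pinv3 /=; congr pair; ring. Qed.

Lemma card_row h (g : sec_carrier h -> sec_carrier h) (gg : 'I_3 -> 'I_3) :
  (forall j, g (ord0, j) = (ord0, gg j)) ->
  #|g @: [set x : sec_carrier h | x.1 == 0 :> nat]| = sz gg.
Proof.
move=> Hg.
have -> : g @: [set x : sec_carrier h | x.1 == 0 :> nat] =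
    [set x in map (fun y => (ord0, y) : sec_carrier h) (map gg l3)].
  apply/setP => x; rewrite inE -map_comp; apply/imsetP/mapP => [[y]|[j _ ->]].
  - rewrite inE => /eqP Hy ->; exists y.2; first exact: mem_l3.
    case: y Hy => k j /= Hk; rewrite /= -Hg; congr (g (_, _)); exact: val_inj.
  - by exists (ord0, j); rewrite ?inE ?Hg.
rewrite cardsE.
have E := eq_card (mem_undup (map (fun y => (ord0, y) : sec_carrier h) (map gg l3))).
rewrite -E (card_uniqP (undup_uniq _)) undup_map_inj ?size_map //.
by move=> a b [].
Qed.

Theorem corollary4p2 (h : nat) (le : rel (sec_carrier h))
  (r f : sec_carrier h -> sec_carrier h) :
  in_N2 le ->
  retraction le r ->
  r @: level le 0 = minimal le (r @: [set: sec_carrier h]) ->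
  minimal le (r @: [set: sec_carrier h]) \subset level le 0 ->
  {in level le 0, forall x, f x \in level le 0} ->
  {in level le 0, forall x, f (f x) = f x} ->
  #|f @: level le 0| = #|minimal le (r @: [set: sec_carrier h])| ->
  exists s : sec_carrier h -> sec_carrier h,
    [/\ retraction le s,
        iso_subposets le (s @: [set: sec_carrier h]) (r @: [set: sec_carrier h])
      & {in level le 0, forall x, s x = f x}].
Proof.
move=> H [Hrr Hrm] Hlev Hmin Hfin Hff Hcard.
have [_ L0] := lev H (leq0n h).
have row0 : forall j, ((ord0, j) : sec_carrier h) \in level le 0 by move=> j; rewrite L0 inE.
have inrow : forall x : sec_carrier h, x \in level le 0 -> x = (ord0, x.2).
  by move=> [k j]; rewrite L0 inE /= => /eqP E; congr pair; exact: val_inj.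
pose g2 j := (r (ord0, j)).2.
pose g1 j := (f (ord0, j)).2.
have Hr0 : forall j, r (ord0, j) = (ord0, g2 j).
  move=> j; apply: inrow; apply: (subsetP Hmin); rewrite -Hlev; apply: imset_f; exact: row0.
have Hf0 : forall j, f (ord0, j) = (ord0, g1 j).
  by move=> j; apply: inrow; apply: Hfin; exact: row0.
have I2 : idem g2 by apply/allP => j _; rewrite {1}/g2 -Hr0 Hrr.
have I1 : idem g1 by apply/allP => j _; rewrite {1}/g1 -Hf0 Hff //; exact: row0.
have S : sz g1 = sz g2.
  rewrite -(card_row Hf0) -(card_row Hr0) -L0 Hlev; exact: Hcard.
have [bb [cc Hbc]] := combF I1 I2 S.
pose s := alpha le bb cc \o r \o beta le bb cc.
exists s; split.
- split.
  + by move=> x; rewrite /s /= alphaK Hrr.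
  + by move=> x y Hxy; rewrite /s /= (alpha_auto H) Hrm // (beta_auto H).
- exists (beta le bb cc), (alpha le bb cc); split.
  + by move=> x /imsetP [y _ ->]; rewrite /s /= alphaK; apply: imset_f.
  + move=> y /imsetP [z _ ->]; apply/imsetP; exists (alpha le bb cc z) => //.
    by rewrite /s /= alphaK.
  + by move=> x _; apply: betaK.
  + by move=> y _; apply: alphaK.
  + by move=> x y _ _; rewrite (beta_auto H).
- move=> x Hx; rewrite (inrow x Hx) /s /= beta0 Hr0 alpha0 Hf0 Hbc.
  by [].
Qed.
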